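(* Let $n\ge5$, $m\in\mathbb N$, $p\in(0,1)$. Then $$\|\varrho_1\ast_1^0\varrho_1\|_2^2=\mathbb P\big(K_{1,4}\subseteq\overline{\mathcal G(n,m,p)}\big)=\big(1-p+p(1-p)^4\big)^m,$$ $$\|\varrho_2\ast_1^1\varrho_2\|_2^2=\big((1-p)^4+4p(1-p)^3+2p^2(1-p)^2\big)^m,$$ $$\|\varrho_2\ast_1^1\varrho_1\|_2^2=\big((1-p)^5+5p(1-p)^4+6p^2(1-p)^3+p^3(1-p)^2\big)^m,$$ $$\|\varrho_1\|_2^2=\big(1-2p^2+p^3\big)^m,$$ where $K_{1,4}$ is a star with four leaves on five fixed vertices of $\mathcal G(n,m,p)$ and $\overline{\mathcal G(n,m,p)}$ is the complement graph.
   Context: Random intersection graph $\mathcal G(n,m,p)$: vertices $v_1,\ldots,v_n$, attributes $a_1,\ldots,a_m$; each vertex chooses each attribute independently with probability $p$; two vertices are adjacent iff they chose a common attribute. $\mu_{m,p}(x)=p^{|x|}(1-p)^{m-|x|}$ on $\{0,1\}^m$. $g(x,y)=1$ if $x_i=y_i=1$ for some $i$, else $0$; $\varrho=\varrho_2=1-g$ and $\varrho_1(x)=\int\varrho(x,y)\,d\mu_{m,p}(y)$. Norms are $L^2$ with respect to products of $\mu_{m,p}$. Contraction: for $f$ on $(\{0,1\}^m)^k$, $h$ on $(\{0,1\}^m)^l$, $0\le a\le b\le k\wedge l$: $f\ast_b^ah(x_1,..,x_{b-a},y_1,..,y_{k-b},z_1,..,z_{l-b})=\int_{(\{0,1\}^m)^a}f(w,x,y)h(w,x,z)\,d\mu_{m,p}^{\otimes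 a}(w)$. *)

(* Defs.v *)
(* all integrals are finite sums over {0,1}^m. *)
From mathcomp Require Import all_boot all_order all_algebra.
Set Implicit Arguments. Unset Strict Implicit. Unset Printing Implicit Defensive.
Import Order.TTheory GRing.Theory Num.Theory.
Local Open Scope ring_scope.

(* {0,1}^m : x i = true means attribute a_i is chosen *)
Definition cube (m : nat) := {ffun 'I_m -> bool}.
Definition cube0 (m : nat) : cube m := [ffun _ => false].

Definition wt (m : nat) (x : cube m) : nat := #|[pred i | x i]|.

Definition mu {R : nzRingType} (m : nat) (p : R) (x : cube m) : R :=
  p ^+ wt x * (1 - p) ^+ (m - wt x).

Definition g (m : nat) (x y : cube m) : bool := [exists i, x i && y i].

Definition rho2 {R : nzRingType} (m : nat) (x y : cube m) : R :=
  if g x y then 0 else 1.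

Definition rho1 {R : nzRingType} (m : nat) (p : R) (x : cube m) : R :=
  \sum_(y : cube m) rho2 x y * mu p y.

(* functions of several variables in {0,1}^m are represented as functions
   on sequences of arguments *)
Definition rho2s {R : nzRingType} (m : nat) (s : seq (cube m)) : R :=
  rho2 (nth (cube0 m) s 0) (nth (cube0 m) s 1).
Definition rho1s {R : nzRingType} (m : nat) (p : R) (s : seq (cube m)) : R :=
  rho1 p (nth (cube0 m) s 0).

(* contraction f *_b^a h for f of arity k, h of arity l, 0 <= a <= b <= min k l;
   the argument s = (x_1..x_{b-a}, y_1..y_{k-b}, z_1..z_{l-b}) *)
Definition contr {R : nzRingType} (m : nat) (p : R) (k l a b : nat)
  (f h : seq (cube m) -> R) : seq (cube m) -> R :=
  fun s =>
    let x := take (b - a) s in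
    let y := take (k - b) (drop (b - a) s) in
    let z := drop ((b - a) + (k - b)) s in
    \sum_(w : a.-tuple (cube m))
      (\prod_(u <- w) mu p u) * f (w ++ x ++ y) * h (w ++ x ++ z).

Definition norm2sq {R : nzRingType} (m : nat) (p : R) (r : nat)
  (F : seq (cube m) -> R) : R :=
  \sum_(s : r.-tuple (cube m)) (\prod_(u <- s) mu p u) * F s ^+ 2.

(* Random intersection graph G(n,m,p): the attribute sets of v_1..v_n are
   X : {ffun 'I_n -> cube m}, with law the product of mu_{m,p}. *)
Definition rig_prob {R : nzRingType} (n m : nat) (p : R)
  (E : {ffun 'I_n -> cube m} -> bool) : R :=
  \sum_(X : {ffun 'I_n -> cube m}) (\prod_(i : 'I_n) mu p (X i)) * (E X)%:R.

Definition compl_adj (n m : nat) (X : {ffun 'I_n -> cube m}) (i j : 'I_n) : bool :=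
  (i != j) && ~~ g (X i) (X j).

(* K_{1,4} on the fixed vertices v_1 (centre) and v_2..v_5 (leaves),
   i.e. indices 0 (centre) and 1..4, is contained in the complement *)
Definition star14_in_compl (n m : nat) (X : {ffun 'I_n -> cube m}) : bool :=
  [forall c : 'I_n, forall j : 'I_n,
     ((nat_of_ord c == 0%N) && (1 <= j <= 4)%N) ==> compl_adj X c j].

(* Main.v *)
Require Import Defs.
From mathcomp Require Import all_boot all_order all_algebra.
From mathcomp Require Import ring.
Import Order.TTheory GRing.Theory Num.Theory.
Local Open Scope ring_scope.

Section Helpers.
Variable R : comNzRingType.
Variable m : nat.
Variable p : R.

Definition m1 (b : bool) : R := if b then p else 1 - p.

Lemma sum_tupleS (T : finType) n (F : n.+1.-tuple T -> R) :
  \sum_(s : n.+1.-tuple T) F s = \sum_(x : T) \sum_(t : n.-tuple T) F (cons_tuple x t).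
Proof.
rewrite pair_big /=.
rewrite (reindex (fun q : T * n.-tuple T => cons_tuple q.1 q.2)) /=.
  by apply: eq_bigr => -[x t].
apply: onW_bij; exists (fun s : n.+1.-tuple T => (thead s, behead_tuple s)).
  by move=> [x t]; congr pair; apply: val_inj.
move=> s; apply: val_inj => /=; case: s => -[|x l] //=.
Qed.

Lemma sum_tuple0 (T : finType) (F : 0.-tuple T -> R) :
  \sum_(s : 0.-tuple T) F s = F [tuple].
Proof.
rewrite (big_pred1 [tuple]) // => t /=; apply/esym/eqP; exact: tuple0.
Qed.

Lemma sum_cube_dep (F : 'I_m -> bool -> R) :
  \sum_(x : cube m) \prod_(i < m) F i (x i) = \prod_(i < m) (F i true + F i false).
Proof.
rewrite /cube -bigA_distr_bigA /=; apply: eq_bigr => i _.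
by rewrite big_bool.
Qed.

Lemma sum_cube (F : bool -> R) :
  \sum_(x : cube m) \prod_(i < m) F (x i) = (F true + F false) ^+ m.
Proof. by rewrite (sum_cube_dep (fun _ => F)) prodr_const card_ord. Qed.

Lemma mu_prod (x : cube m) : mu p x = \prod_(i < m) m1 (x i).
Proof.
rewrite /mu /wt [RHS](bigID (fun i => x i)) /=.
rewrite [X in _ = X * _](eq_bigr (fun _ => p)); last by move=> i ->.
rewrite [X in _ = _ * X](eq_bigr (fun _ => 1 - p)); last by move=> i /negbTE ->.
rewrite !prodr_const; congr (_ * _ ^+ _).
have := cardC [pred i | x i]; rewrite card_ord => E.
rewrite -{1}E addKn; apply: eq_card => i; by rewrite !inE.
Qed.

Lemma rho2_prod (x y : cube m) :
  rho2 x y = \prod_(i < m) (if x i && y i then 0 else 1 : R).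
Proof.
rewrite /rho2 /g; case: existsP => [[i Hi]|H].
  by rewrite (bigD1 i) //= Hi mul0r.
rewrite big1 // => i _; case: ifP => // Hi; case: H; by exists i.
Qed.

Definition r1 (b : bool) : R := if b then 1 - p else 1.

Lemma rho1_prod (x : cube m) : rho1 p x = \prod_(i < m) r1 (x i).
Proof.
rewrite /rho1.
rewrite (eq_bigr (fun y : cube m => \prod_(i < m)
   ((if x i && y i then 0 else 1) * m1 (y i)))); last first.
  by move=> y _; rewrite rho2_prod mu_prod big_split.
rewrite (sum_cube_dep (fun i b => (if x i && b then 0 else 1) * m1 b)); apply: eq_bigr => i _.
by rewrite /m1 /r1; case: (x i) => /=; ring.
Qed.


Lemma part5 : @norm2sq R m p 1 (@rho1s R m p) = (1 - 2%:R * p ^+ 2 + p ^+ 3) ^+ m.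
Proof.
rewrite /norm2sq sum_tupleS /=.
rewrite (eq_bigr (fun x : cube m => \prod_(i < m) (m1 (x i) * r1 (x i) ^+ 2))).
  rewrite (sum_cube (fun b => m1 b * r1 b ^+ 2)); congr (_ ^+ _); rewrite /m1 /r1; ring.
move=> x _; rewrite sum_tuple0 /= big_cons big_nil mulr1 /rho1s /= rho1_prod mu_prod.
by rewrite -prodrXl -big_split.
Qed.

Lemma part1 : @norm2sq R m p 1 (@contr R m p 1 1 0 1 (@rho1s R m p) (@rho1s R m p))
   = (1 - p + p * (1 - p) ^+ 4) ^+ m.
Proof.
rewrite /norm2sq sum_tupleS /=.
rewrite (eq_bigr (fun x : cube m => \prod_(i < m) (m1 (x i) * r1 (x i) ^+ 4))).
  rewrite (sum_cube (fun b => m1 b * r1 b ^+ 4)); congr (_ ^+ _); rewrite /m1 /r1; ring.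
move=> x _; rewrite sum_tuple0 /= big_cons big_nil mulr1 /contr /= sum_tuple0 /=.
rewrite big_nil mul1r /rho1s /= rho1_prod mu_prod.
by rewrite -expr2 -exprM -prodrXl -big_split.
Qed.

Definition r2 (a b : bool) : R := if a && b then 0 else 1.

Lemma sum_tuple1 (T : finType) (F : 1.-tuple T -> R) :
  \sum_(s : 1.-tuple T) F s = \sum_(x : T) F [tuple x].
Proof.
rewrite sum_tupleS; apply: eq_bigr => x _; rewrite sum_tuple0.
by congr F; apply: val_inj.
Qed.

Lemma contr_aux (x y : cube m) :
  \sum_(w : cube m) mu p w * rho2 w x * rho2 w y =
  \prod_(i < m) (m1 true * r2 true (x i) * r2 true (y i)
                 + m1 false * r2 false (x i) * r2 false (y i)).
Proof.
rewrite -(sum_cube_dep (fun i b => m1 b * r2 b (x i) * r2 b (y i))).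
by apply: eq_bigr => w _; rewrite mu_prod !rho2_prod -!big_split.
Qed.

Lemma part3 : @norm2sq R m p 2 (@contr R m p 2 2 1 1 (@rho2s R m) (@rho2s R m))
   = ((1 - p) ^+ 4 + 4%:R * p * (1 - p) ^+ 3
           + 2%:R * p ^+ 2 * (1 - p) ^+ 2) ^+ m.
Proof.
pose c a b := m1 true * r2 true a * r2 true b + m1 false * r2 false a * r2 false b.
pose H a b := m1 a * m1 b * c a b ^+ 2.
rewrite /norm2sq sum_tupleS /=.
rewrite (eq_bigr (fun x : cube m => \prod_(i < m) (H (x i) true + H (x i) false))).
  rewrite (sum_cube (fun a => H a true + H a false)); congr (_ ^+ _).
  rewrite /H /c /m1 /r2 /=; ring.
move=> x _; rewrite sum_tuple1 /=.
rewrite -(sum_cube_dep (fun i b => H (x i) b)); apply: eq_bigr => y _.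
rewrite /contr /= sum_tuple1 /=.
rewrite !big_cons big_nil /rho2s /= mulr1.
rewrite (eq_bigr (fun w : cube m => mu p w * rho2 w x * rho2 w y)); last first.
  by move=> w _; rewrite big_seq1.
rewrite contr_aux !mu_prod -prodrXl -!big_split.
by apply: eq_bigr.
Qed.

Lemma part4 : @norm2sq R m p 1 (@contr R m p 2 1 1 1 (@rho2s R m) (@rho1s R m p))
   = ((1 - p) ^+ 5 + 5%:R * p * (1 - p) ^+ 4
           + 6%:R * p ^+ 2 * (1 - p) ^+ 3 + p ^+ 3 * (1 - p) ^+ 2) ^+ m.
Proof.
pose d a := m1 true * r2 true a * r1 true + m1 false * r2 false a * r1 false.
pose H a := m1 a * d a ^+ 2.
rewrite /norm2sq sum_tuple1 /=.
rewrite (eq_bigr (fun x : cube m => \prod_(i < m) H (x i))).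
  rewrite (sum_cube H); congr (_ ^+ _).
  rewrite /H /d /m1 /r1 /r2 /=; ring.
move=> x _; rewrite /contr /= sum_tuple1 /=.
rewrite big_seq1 /rho2s /rho1s /=.
rewrite (eq_bigr (fun w : cube m => \prod_(i < m) (m1 (w i) * r2 (w i) (x i) * r1 (w i)))); last first.
  by move=> w _; rewrite big_seq1 mu_prod rho2_prod rho1_prod -!big_split.
rewrite (sum_cube_dep (fun i b => m1 b * r2 b (x i) * r1 b)).
by rewrite mu_prod -prodrXl -big_split.
Qed.

Lemma sum_mu : \sum_(v : cube m) mu p v = 1.
Proof.
rewrite (eq_bigr (fun v : cube m => \prod_(i < m) m1 (v i))); last by move=> v _; rewrite mu_prod.
by rewrite sum_cube /m1 subrKC expr1n.
Qed.

Lemma rho1_pow4 : \sum_(c : cube m) mu p c * rho1 p c ^+ 4 = (1 - p + p * (1 - p) ^+ 4) ^+ m.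
Proof.
rewrite (eq_bigr (fun x : cube m => \prod_(i < m) (m1 (x i) * r1 (x i) ^+ 4))).
  rewrite (sum_cube (fun b => m1 b * r1 b ^+ 4)); congr (_ ^+ _); rewrite /m1 /r1; ring.
by move=> x _; rewrite mu_prod rho1_prod -prodrXl -big_split.
Qed.

Section Rig.
Variable n : nat.
Hypothesis hn : (5 <= n)%N.
Let i0 : 'I_n := Ordinal (leq_trans (isT : (0 < 5)%N) hn).
Let P (i : 'I_n) := (1 <= i <= 4)%N.

Lemma starE (X : {ffun 'I_n -> cube m}) :
  (star14_in_compl X)%:R = \prod_(i < n) (if P i then rho2 (X i0) (X i) else 1 : R).
Proof.
case: (boolP (star14_in_compl X)) => H.
  rewrite big1 // => i _; rewrite /P; case: ifP => // Pi.
  move/forallP: H => /(_ i0) /forallP /(_ i) /implyP.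
  rewrite /= Pi => /(_ isT) /andP [_ ng].
  by rewrite /rho2 (negbTE ng).
move/forallPn: H => [c /forallPn [j]].
rewrite negb_imply => /andP [/andP [c0 Pj] nadj].
have ci0 : c = i0 by apply: val_inj; apply/eqP.
rewrite (bigD1 j) //= /P Pj.
move: nadj; rewrite /compl_adj negb_and !negbK.
have cj : (c != j).
  apply/negP => /eqP cj; move: Pj; rewrite -cj (eqP c0) //.
rewrite (negbTE cj) /= -ci0 /rho2 => ->; by rewrite mul0r.
Qed.

Definition G (c : cube m) (i : 'I_n) (v : cube m) : R :=
  if i == i0 then mu p v * (v == c)%:R
  else mu p v * (if P i then rho2 c v else 1).

Lemma stepB (X : {ffun 'I_n -> cube m}) :
  (\prod_(i < n) mu p (X i)) * (star14_in_compl X)%:R =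
  \sum_(c : cube m) \prod_(i < n) G c i (X i).
Proof.
rewrite [RHS](bigD1 (X i0)) //= [X in _ + X]big1 ?addr0; last first.
  move=> c nc; rewrite (bigD1 i0) //= /G eqxx.
  by rewrite eq_sym (negbTE nc) mulr0 mul0r.
rewrite starE -big_split; apply: eq_bigr => i _ /=.
rewrite /G; case: eqP => [->|_] //.
by rewrite eqxx /P /=.
Qed.

Lemma stepD (c : cube m) :
  \prod_(i < n) \sum_(v : cube m) G c i v = mu p c * rho1 p c ^+ 4.
Proof.
rewrite (bigD1 i0) //=; congr (_ * _).
  rewrite /G eqxx (bigD1 c) //= eqxx mulr1n mulr1 big1 ?addr0 // => v nv.
  by rewrite (negbTE nv) mulr0n mulr0.
have E : forall i, i != i0 -> \sum_(v : cube m) G c i v =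
   (if P i then rho1 p c else 1).
  move=> i ni; rewrite /G (negbTE ni); case: ifP => _; last first.
    by rewrite (eq_bigr (fun v => mu p v)) ?sum_mu // => v _; rewrite mulr1.
  by rewrite /rho1; apply: eq_bigr => v _; rewrite mulrC.
rewrite (eq_bigr _ E).
have -> : \prod_(i < n | i != i0) (if P i then rho1 p c else 1) =
          \prod_(i < n) (if P i then rho1 p c else 1).
  by rewrite [RHS](bigD1 i0) //= /P /= mul1r.
rewrite /P.
rewrite -(big_mkord xpredT (fun i => if (1 <= i <= 4)%N then rho1 p c else 1)).
case: n hn => [|[|[|[|[|k]]]]] // _.
rewrite big_ltn // big_ltn // big_ltn // big_ltn // big_ltn //=.
rewrite big_nat_cond big1 ?mulr1 ?mul1r; first by rewrite !exprS expr0 mulr1.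
move=> i /andP [/andP [i5 _] _]; case: ifP => // /andP [_ i4].
by have := leq_trans i5 i4.
Qed.

Lemma rig_val : @rig_prob R n m p (@star14_in_compl n m) =
   (1 - p + p * (1 - p) ^+ 4) ^+ m.
Proof.
rewrite /rig_prob (eq_bigr _ (fun X _ => stepB X)) exchange_big /=.
rewrite -rho1_pow4; apply: eq_bigr => c _.
by rewrite -stepD bigA_distr_bigA.
Qed.
End Rig.

End Helpers.

Theorem lemma7p3 (R : realFieldType) (n m : nat) (p : R) :
  (5 <= n)%N -> 0 < p -> p < 1 ->
  [/\ @norm2sq R m p 1
        (@contr R m p 1 1 0 1 (@rho1s R m p) (@rho1s R m p))
        = @rig_prob R n m p (@star14_in_compl n m),
      @rig_prob R n m p (@star14_in_compl n m)
        = (1 - p + p * (1 - p) ^+ 4) ^+ m,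
      @norm2sq R m p 2
        (@contr R m p 2 2 1 1 (@rho2s R m) (@rho2s R m))
        = ((1 - p) ^+ 4 + 4%:R * p * (1 - p) ^+ 3
           + 2%:R * p ^+ 2 * (1 - p) ^+ 2) ^+ m,
      @norm2sq R m p 1
        (@contr R m p 2 1 1 1 (@rho2s R m) (@rho1s R m p))
        = ((1 - p) ^+ 5 + 5%:R * p * (1 - p) ^+ 4
           + 6%:R * p ^+ 2 * (1 - p) ^+ 3 + p ^+ 3 * (1 - p) ^+ 2) ^+ m
    & @norm2sq R m p 1 (@rho1s R m p) = (1 - 2%:R * p ^+ 2 + p ^+ 3) ^+ m].
Proof.
move=> hn _ _.
have Hr := @rig_val R m p n hn.
split.
- by rewrite part1 Hr.
- exact: Hr.
- exact: part3.
- exact: part4.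
- exact: part5.
Qed.
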